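(* Let $\xi$ be a complex random variable with $\mathbb{E}\xi=0$, $\mathbb{E}|\xi|^2=1$ and $\mathbb{E}|\xi|^{4+\epsilon}<\infty$ for some $\epsilon>0$; let $b_n$ divide $n$, let $\tilde X$ be the $n\times n$ periodic block band matrix with atom variable $\xi$ and bandwidth $b_n$, and $X=\tilde X/\sqrt{3b_n}$. For fixed $z\in\mathbb{C}$ and $\zeta$ with $\Im\zeta>0$, let $P_{z,\zeta}:=(X-zI)(X-zI)^*-\zeta I$. Then for all $1\le i\le n$, $$\mathbb{E}\big[(P_{z,\zeta})^{-1}_{ii}\big]=\mathbb{E}\big[(P_{z,\zeta})^{-1}_{11}\big].$$
   Context: Periodic block band matrix: $m:=n/b_n$; $\tilde D_i,\tilde U_i,\tilde T_i$ ($i\in[m]$) are $3m$ independent $b_n\times b_n$ random matrices with iid entries distributed as $\xi$; $\tilde X$ is the $m\times m$ block matrix (blocks $b_n\times b_n$, block indices modulo $m$) with $(i,i)$ block $\tilde D_i$, $(i,i-1)$ block $\tilde T_{i-1}$, $(i,i+1)$ block $\tilde U_{i+1}$, other blocks zero. *)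

(* Defs.v *)
From HB Require Import structures.
From mathcomp Require Import all_boot all_order all_algebra.
From mathcomp Require Import all_classical all_reals all_analysis.
From mathcomp Require Import complex.
Set Implicit Arguments. Unset Strict Implicit. Unset Printing Implicit Defensive.
Import Order.TTheory GRing.Theory Num.Theory.
Local Open Scope classical_set_scope.
Local Open Scope ring_scope.

Section Defs.
Context {R : realType} {d : measure_display} {T : measurableType d}.

Definition cmod (w : R[i]) : R := Normc.normc w.

(* a set of complex numbers is Borel if its image in R*R is Borel
   (Borel(R) (x) Borel(R) = Borel(R^2)) *)
Definition cborel (A : set R[i]) : Prop :=
  measurable [set p : R * R | A (Complex p.1 p.2)].

Definition crv (X : T -> R[i]) : Prop :=
  measurable_fun setT (fun t => (complex.Re (X t), complex.Im (X t))).

Definition cindep (P : probability T R) (I : finType) (Y : I -> T -> R[i]) : Prop :=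
  forall (J : {set I}) (A : I -> set R[i]), (forall j, cborel (A j)) ->
    P (\bigcap_(j in [set x | x \in J]) (Y j @^-1` A j)) =
    (\prod_(j in J) P (Y j @^-1` A j))%E.

Definition same_law (P : probability T R) (X xi : T -> R[i]) : Prop :=
  forall A, cborel A -> P (X @^-1` A) = P (xi @^-1` A).

Definition cexpect (P : probability T R) (X : T -> R[i]) : R[i] :=
  Complex (fine ('E_P[fun t => complex.Re (X t)]))
          (fine ('E_P[fun t => complex.Im (X t)])).

(* the atom variables: Y (c, k, r, s) is the (r, s) entry of
   D_k (c = 0), U_k (c = 1) or T_k (c = 2), k : 'I_m, r s : 'I_b *)
Definition atom_idx (m b : nat) := ('I_3 * 'I_m * 'I_b * 'I_b)%type.

Definition getY (m b : nat) (Y : atom_idx m b -> T -> R[i])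
    (c : 'I_3) (k r s : nat) (t : T) : R[i] :=
  match insub k, insub r, insub s with
  | Some k', Some r', Some s' => Y (c, k', r', s') t
  | _, _, _ => 0
  end.

(* Block (k,k) is D_k, block (k,k-1) is
   T_{k-1}, block (k,k+1) is U_{k+1}, block indices mod m (if these block
   positions coincide, i.e. m <= 2, the blocks are added). *)
Definition band_mx (m b : nat) (Y : atom_idx m b -> T -> R[i]) (t : T)
    : 'M[R[i]]_(m * b) :=
  \matrix_(i, j)
    let k := (i %/ b)%N in let l := (j %/ b)%N in
    let r := (i %% b)%N in let s := (j %% b)%N in
      (l == k)%:R * getY Y 0 l r s t
    + (l == (k + m.-1) %% m)%N%:R * getY Y 2 l r s t
    + (l == k.+1 %% m)%N%:R * getY Y 1 l r s t.

Definition adj_mx (n : nat) (A : 'M[R[i]]_n) : 'M[R[i]]_n :=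
  map_mx (fun w => w^*) A^T.

Definition Pmat (m b : nat) (Y : atom_idx m b -> T -> R[i]) (z zeta : R[i])
    (t : T) : 'M[R[i]]_(m * b) :=
  let X := Complex ((Num.sqrt (3 * b)%:R)^-1) 0 *: band_mx Y t in
  (X - z%:M) *m adj_mx (X - z%:M) - zeta%:M.

End Defs.

(* Main.v *)
Require Import Defs.
From HB Require Import structures.
From mathcomp Require Import all_boot all_order all_algebra.
From mathcomp Require Import all_classical all_reals all_analysis.
From mathcomp Require Import complex.
From mathcomp Require Import measurable_realfun.
From mathcomp Require Import fingroup perm.
Import Order.TTheory GRing.Theory Num.Theory.

Section Arith.
Lemma addmod_eq (u v p M : nat) : (u < M)%N -> (v < M)%N ->
  ((u + p) %% M == (v + p) %% M) = (u == v).
Proof.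
move=> hu hv; by rewrite eqn_modDr !modn_small.
Qed.
End Arith.

Local Open Scope classical_set_scope.
Local Open Scope ring_scope.

HB.instance Definition _ (R : realType) := isPointed.Build R[i] 0.
Section Closure.
Context {R : realType} {d0 : measure_display} {T0 : measurableType d0}.

Lemma invr_meas : measurable_fun [set: R] (fun x : R => x^-1).
Proof.
have -> : (fun x : R => x^-1) = (fun x => if x != 0 then x^-1 else 0).
  by apply: funext => x; case: eqP => // ->; rewrite invr0.
have hs : [set: R] `&` (fun x : R => x != 0) @^-1` [set true] = ~` [set 0].
  apply/seteqP; split => x /=; first by move=> [_]; case: eqP.
  by move=> hx; split => //; apply/eqP.
apply: measurable_fun_if => //.
- apply: (measurable_fun_bool true); rewrite hs.
  exact/measurableC.
- rewrite hs; apply: measurable_realfun.open_continuous_measurable_fun.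
  + apply: closed_openC; apply: accessible_closed_set1.
    exact/hausdorff_accessible/Rhausdorff.
  + move=> x /set_mem hx; apply: inv_continuous; exact/eqP.
Qed.

Definition cm (f : T0 -> R[i]) :=
  measurable_fun setT (fun v => complex.Re (f v)) /\
  measurable_fun setT (fun v => complex.Im (f v)).

Lemma cm_cst c : cm (fun _ => c).
Proof. by split; exact: measurable_cst. Qed.

Lemma cm_add f g : cm f -> cm g -> cm (fun v => f v + g v).
Proof.
move=> [f1 f2] [g1 g2]; split.
  have -> : (fun v => complex.Re (f v + g v)) = (fun v => complex.Re (f v) + complex.Re (g v)).
    by apply: funext => v; case: (f v) => ? ?; case: (g v).
  exact: measurable_realfun.measurable_funD.
have -> : (fun v => complex.Im (f v + g v)) = (fun v => complex.Im (f v) + complex.Im (g v)).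
  by apply: funext => v; case: (f v) => ? ?; case: (g v).
exact: measurable_realfun.measurable_funD.
Qed.

Lemma cm_opp f : cm f -> cm (fun v => - f v).
Proof.
move=> [f1 f2]; split.
  have -> : (fun v => complex.Re (- f v)) = (fun v => - complex.Re (f v)).
    by apply: funext => v; case: (f v).
  exact: measurable_realfun.measurable_funN.
have -> : (fun v => complex.Im (- f v)) = (fun v => - complex.Im (f v)).
  by apply: funext => v; case: (f v).
exact: measurable_realfun.measurable_funN.
Qed.

Lemma cm_sub f g : cm f -> cm g -> cm (fun v => f v - g v).
Proof. by move=> hf hg; apply: cm_add => //; exact: cm_opp. Qed.

Lemma cm_mul f g : cm f -> cm g -> cm (fun v => f v * g v).
Proof.
move=> [f1 f2] [g1 g2]; split.
  have -> : (fun v => complex.Re (f v * g v)) = (fun v => complex.Re (f v) * complex.Re (g v) - complex.Im (f v) * complex.Im (g v)).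
    by apply: funext => v; case: (f v) => ? ?; case: (g v).
  by apply: measurable_realfun.measurable_funB; exact: measurable_realfun.measurable_funM.
have -> : (fun v => complex.Im (f v * g v)) = (fun v => complex.Re (f v) * complex.Im (g v) + complex.Im (f v) * complex.Re (g v)).
  by apply: funext => v; case: (f v) => ? ?; case: (g v).
by apply: measurable_realfun.measurable_funD; exact: measurable_realfun.measurable_funM.
Qed.

Lemma cm_conj f : cm f -> cm (fun v => (f v)^*).
Proof.
move=> [f1 f2]; split.
  have -> : (fun v => complex.Re ((f v)^*)) = (fun v => complex.Re (f v)).
    by apply: funext => v; case: (f v).
  done.
have -> : (fun v => complex.Im ((f v)^*)) = (fun v => - complex.Im (f v)).
  by apply: funext => v; case: (f v).
exact: measurable_realfun.measurable_funN.
Qed.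

Lemma cm_inv f : cm f -> cm (fun v => (f v)^-1).
Proof.
move=> [f1 f2].
have hd : measurable_fun setT (fun v => (complex.Re (f v) ^+ 2 + complex.Im (f v) ^+ 2)^-1).
  apply: (measurableT_comp invr_meas).
  by apply: measurable_realfun.measurable_funD; exact: measurable_realfun.measurable_funX.
split.
  have -> : (fun v => complex.Re ((f v)^-1)) = (fun v => complex.Re (f v) * (complex.Re (f v) ^+ 2 + complex.Im (f v) ^+ 2)^-1).
    by apply: funext => v; case: (f v).
  exact: measurable_realfun.measurable_funM.
have -> : (fun v => complex.Im ((f v)^-1)) = (fun v => - complex.Im (f v) * (complex.Re (f v) ^+ 2 + complex.Im (f v) ^+ 2)^-1).
  by apply: funext => v; case: (f v) => a b /=; rewrite mulNr.
apply: measurable_realfun.measurable_funM => //; exact: measurable_realfun.measurable_funN.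
Qed.

Lemma cm_sum (J : Type) (s : seq J) (P : pred J) (F : J -> T0 -> R[i]) :
  (forall j, cm (F j)) -> cm (fun v => \sum_(j <- s | P j) F j v).
Proof.
move=> hF; elim: s => [|x s IH].
  by under eq_fun do rewrite big_nil; exact: cm_cst.
under eq_fun do rewrite big_cons.
case: (P x); last exact: IH.
exact: cm_add.
Qed.

Lemma cm_prod (J : Type) (s : seq J) (P : pred J) (F : J -> T0 -> R[i]) :
  (forall j, cm (F j)) -> cm (fun v => \prod_(j <- s | P j) F j v).
Proof.
move=> hF; elim: s => [|x s IH].
  by under eq_fun do rewrite big_nil; exact: cm_cst.
under eq_fun do rewrite big_cons.
case: (P x); last exact: IH.
exact: cm_mul.
Qed.

Lemma cm_if (b : T0 -> bool) f g : measurable_fun setT b -> cm f -> cm g ->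
  cm (fun v => if b v then f v else g v).
Proof.
move=> mb [f1 f2] [g1 g2]; split.
  have -> : (fun v => complex.Re (if b v then f v else g v)) = (fun v => if b v then complex.Re (f v) else complex.Re (g v)).
    by apply: funext => v; case: (b v).
  exact: measurable_fun_ifT.
have -> : (fun v => complex.Im (if b v then f v else g v)) = (fun v => if b v then complex.Im (f v) else complex.Im (g v)).
  by apply: funext => v; case: (b v).
exact: measurable_fun_ifT.
Qed.

Lemma cm_neq0 f : cm f -> measurable_fun setT (fun v => f v != 0).
Proof.
move=> [f1 f2]; apply: (measurable_fun_bool true); rewrite setTI.
have -> : (fun v => f v != 0) @^-1` [set true] =
   ~` ((setT `&` (fun v => complex.Re (f v)) @^-1` [set 0]) `&`
       (setT `&` (fun v => complex.Im (f v)) @^-1` [set 0])).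
  apply/seteqP; split => v /=; case: (f v) => a b /=.
    by move=> /eqP h [[_ ha] [_ hb]]; apply: h; rewrite ha hb.
  move=> h; apply/eqP => -[ha hb]; apply: h; split; split => //.
apply: measurableC; apply: measurableI.
  exact: f1.
exact: f2.
Qed.

Definition cmx {n} (M : T0 -> 'M[R[i]]_n) := forall x y, cm (fun v => M v x y).

Lemma cm_ext {f g} : f =1 g -> cm f -> cm g.
Proof. by move=> /funext ->. Qed.
Lemma cm_ext2 {f g} : cm f -> f =1 g -> cm g.
Proof. by move=> h /funext <-. Qed.

Lemma cmx_det n (M : T0 -> 'M[R[i]]_n) : cmx M -> cm (fun v => \det (M v)).
Proof.
move=> hM; rewrite /determinant.
apply: cm_sum => s; apply: cm_mul; first exact: cm_cst.
by apply: cm_prod => x; exact: hM.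
Qed.

Lemma cmx_adj n (M : T0 -> 'M[R[i]]_n) : cmx M -> cmx (fun v => \adj (M v)).
Proof.
move=> hM x y; apply: (@cm_ext (fun v => cofactor (M v) y x)).
  by move=> v; rewrite mxE.
rewrite /cofactor; apply: cm_mul; first exact: cm_cst.
apply: cmx_det => x' y'; apply: (cm_ext2 (hM _ _)) => v.
by rewrite !mxE.
Qed.

Lemma cmx_inv n (M : T0 -> 'M[R[i]]_n) : cmx M -> cmx (fun v => invmx (M v)).
Proof.
move=> hM x y.
apply: (@cm_ext (fun v => if \det (M v) != 0 then (\det (M v))^-1 * \adj (M v) x y else M v x y)).
  move=> v; rewrite /invmx. rewrite unitmxE. rewrite unitfE. by case: (\det (M v) != 0); rewrite ?mxE.
apply: cm_if; first exact/cm_neq0/cmx_det.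
  by apply: cm_mul; [exact/cm_inv/cmx_det | exact: cmx_adj].
exact: hM.
Qed.

Lemma cmx_add n (M N : T0 -> 'M[R[i]]_n) : cmx M -> cmx N -> cmx (fun v => M v + N v).
Proof. move=> hM hN x y; apply: (cm_ext2 (cm_add _ _ (hM x y) (hN x y))) => v; by rewrite mxE. Qed.
Lemma cmx_sub n (M N : T0 -> 'M[R[i]]_n) : cmx M -> cmx N -> cmx (fun v => M v - N v).
Proof. move=> hM hN x y; apply: (cm_ext2 (cm_sub _ _ (hM x y) (hN x y))) => v; by rewrite !mxE. Qed.
Lemma cmx_mul n (M N : T0 -> 'M[R[i]]_n) : cmx M -> cmx N -> cmx (fun v => M v *m N v).
Proof.
move=> hM hN x y; apply: (@cm_ext (fun v => \sum_j M v x j * N v j y)).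
  by move=> v; rewrite mxE.
by apply: cm_sum => j; apply: cm_mul.
Qed.
Lemma cmx_cst n (A : 'M[R[i]]_n) : cmx (fun _ => A).
Proof. by move=> x y; exact: cm_cst. Qed.
Lemma cmx_scale n c (M : T0 -> 'M[R[i]]_n) : cmx M -> cmx (fun v => c *: M v).
Proof. move=> hM x y; apply: (cm_ext2 (cm_mul _ _ (cm_cst c) (hM x y))) => v; by rewrite mxE. Qed.
Lemma cmx_adjmx n (M : T0 -> 'M[R[i]]_n) : cmx M -> cmx (fun v => adj_mx (M v)).
Proof. move=> hM x y; apply: (cm_ext2 (cm_conj _ (hM y x))) => v; by rewrite /adj_mx !mxE. Qed.
End Closure.

Section Band.
Context {R : realType} {m b : nat} {d0 : measure_display} {T0 : measurableType d0}.
Variable Y : atom_idx m b -> T0 -> R[i].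
Hypothesis hY : forall a, cm (Y a).

Lemma cm_getY c k r s : cm (fun v => getY Y c k r s v).
Proof.
rewrite /getY; case: insub => [k'|]; last exact: cm_cst.
case: insub => [r'|]; last exact: cm_cst.
case: insub => [s'|]; last exact: cm_cst.
exact: hY.
Qed.

Lemma cmx_band : cmx (fun v => band_mx Y v).
Proof.
move=> x y; rewrite /band_mx.
apply: (cm_ext (f := fun v => _)). by move=> v; rewrite mxE; reflexivity.
apply: cm_add; first apply: cm_add; apply: cm_mul; (exact: cm_cst || exact: cm_getY).
Qed.

Lemma cmx_Pmat z zeta : cmx (fun v => Pmat Y z zeta v).
Proof.
rewrite /Pmat /=.
apply: cmx_sub; last exact: cmx_cst.
apply: cmx_mul; first by apply: cmx_sub; [apply: cmx_scale; exact: cmx_band | exact: cmx_cst].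
apply: cmx_adjmx; apply: cmx_sub; [apply: cmx_scale; exact: cmx_band | exact: cmx_cst].
Qed.

Lemma cm_resolvent z zeta x : cm (fun v => invmx (Pmat Y z zeta v) x x).
Proof. exact/cmx_inv/cmx_Pmat. Qed.
End Band.

Section Meas.
Context (R : realType) (I : finType).

Definition rects : set (set (I -> R[i])) :=
  [set B | exists A : I -> set R[i], (forall a, cborel (A a)) /\
     B = [set v | forall a, A a (v a)]].
Definition Sv := g_sigma_algebraType rects.

Lemma cborelT : cborel (@setT R[i]).
Proof. by rewrite /cborel; have -> : [set p : R * R | setT (Complex p.1 p.2)] = setT by []. Qed.

Lemma cborel_Re (B : set R) : measurable B -> cborel [set w : R[i] | B (complex.Re w)].
Proof.
move=> mB; rewrite /cborel /=.
have -> : [set p : R * R | B p.1] = B `*` setT.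
  by apply/seteqP; split => p /=; rewrite /setX /=; tauto.
exact: measurableX.
Qed.

Lemma cborel_Im (B : set R) : measurable B -> cborel [set w : R[i] | B (complex.Im w)].
Proof.
move=> mB; rewrite /cborel /=.
have -> : [set p : R * R | B p.2] = setT `*` B.
  by apply/seteqP; split => p /=; rewrite /setX /=; tauto.
exact: measurableX.
Qed.

Lemma proj_meas (a : I) (g : R[i] -> R) :
  (forall B : set R, measurable B -> cborel [set w | B (g w)]) ->
  measurable_fun [set: Sv] (fun v : Sv => g (v a)).
Proof.
move=> hg _ B mB; rewrite setTI; apply: sub_sigma_algebra.
exists (fun a' => if a' == a then [set w | B (g w)] else setT); split.
  by move=> a'; case: eqP => _; [exact: hg | exact: cborelT].
apply/seteqP; split => v /=.
  by move=> Bv a'; case: eqP => [->|].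
by move=> /(_ a); rewrite eqxx.
Qed.

Lemma proj_Re a : measurable_fun [set: Sv] (fun v : Sv => complex.Re (v a)).
Proof. apply: proj_meas; exact: cborel_Re. Qed.
Lemma proj_Im a : measurable_fun [set: Sv] (fun v : Sv => complex.Im (v a)).
Proof. apply: proj_meas; exact: cborel_Im. Qed.


Context {d : measure_display} {T : measurableType d}.

Lemma preim_crv (X : T -> R[i]) (A : set R[i]) : crv X -> cborel A -> measurable (X @^-1` A).
Proof.
move=> hX hA.
have -> : X @^-1` A = setT `&` (fun t => (complex.Re (X t), complex.Im (X t))) @^-1`
     [set p : R * R | A (Complex p.1 p.2)].
  apply/seteqP; split => t; rewrite /preimage /=; case: (X t) => a b; [by move=> h; split | by case].
exact: hX.
Qed.

Lemma vec_meas (Y : I -> T -> R[i]) : (forall a, crv (Y a)) ->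
  measurable_fun [set: T] ((fun t a => Y a t) : T -> Sv).
Proof.
move=> hY; apply: (@measurability _ _ T Sv setT _ rects) => //.
move=> _ [_ [A [hA ->]] <-]; rewrite setTI.
have -> : (fun t a => Y a t) @^-1` [set v | forall a, A a (v a)] =
    \bigcap_(a in [set: I]) (Y a @^-1` A a).
  by apply/seteqP; split => t /=; [move=> h a _; exact: h | move=> h a; exact: h].
apply: fin_bigcap_measurable; first exact: finite_finset.
by move=> a _; exact: preim_crv.
Qed.


Lemma rects_setI : setI_closed rects.
Proof.
move=> _ _ [A [hA ->]] [A' [hA' ->]].
exists (fun a => A a `&` A' a); split.
  move=> a; rewrite /cborel.
  have -> : [set p : R * R | (A a `&` A' a) (Complex p.1 p.2)] =
     [set p : R * R | A a (Complex p.1 p.2)] `&` [set p : R * R | A' a (Complex p.1 p.2)] by [].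
  exact: (measurableI _ _ (hA a) (hA' a)).
apply/seteqP; split => v /=; first by move=> [h1 h2] a; split.
by move=> h; split => a; case: (h a).
Qed.

Lemma rectsT : rects setT.
Proof.
exists (fun _ => setT); split; first by move=> _; exact: cborelT.
by apply/seteqP; split.
Qed.

Lemma law_perm (P : probability T R) (Y : I -> T -> R[i]) (xi : T -> R[i])
  (s : {perm I}) : (forall a, crv (Y a)) -> cindep P Y ->
  (forall a, same_law P (Y a) xi) ->
  forall B : set Sv, measurable B ->
  P ((fun t a => Y a t) @^-1` B) = P ((fun t a => Y (s a) t) @^-1` B).
Proof.
move=> hY hind hlaw B mB.
have m1 := vec_meas _ hY.
have m2 := vec_meas (fun a => Y (s a)) (fun a => hY (s a)).
pose mu1 := measure_function_pushforward__canonical__measure_function_Measure P m1.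
pose mu2 := measure_function_pushforward__canonical__measure_function_Measure P m2.
have := @measure_unique _ R Sv rects (fun _ => setT) erefl rects_setI (fun _ => rectsT)
  _ mu1 mu2 _ _ B mB.
apply.
- by apply/seteqP; split => // v _; exists 0%N.
- move=> _ [A [hA ->]].
  rewrite /mu1 /mu2 /= /pushforward.
  have e1 : (fun t a => Y a t) @^-1` [set v | forall a, A a (v a)] =
     \bigcap_(j in [set x | x \in [set: I]%SET]) (Y j @^-1` A j).
    by apply/seteqP; split => t /=; [move=> h a _; exact: h | move=> h a; apply: h; exact: finset.in_setT].
  have e2 : (fun t a => Y (s a) t) @^-1` [set v | forall a, A a (v a)] =
     \bigcap_(j in [set x | x \in [set: I]%SET]) (Y j @^-1` (A (s^-1 j)%g)).
    apply/seteqP; split => t /=.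
      by move=> h j _; have := h (s^-1 j)%g; rewrite permKV.
    by move=> h a; have := h (s a); rewrite permK; apply; exact: finset.in_setT.
  rewrite e1 e2 (hind [set: I]%SET A hA) (hind [set: I]%SET (fun j => A (s^-1 j)%g)); last first.
    by move=> j; exact: hA.
  under eq_bigr do rewrite hlaw //.
  under [RHS]eq_bigr do rewrite hlaw //.
  rewrite (reindex_inj (h := s) (F := fun j => P (xi @^-1` A (s^-1 j)%g)) (@perm_inj _ s)) /=.
  by apply: eq_big => [j|j _]; rewrite ?finset.in_setT ?permK.
- move=> k; rewrite /mu1 /= /pushforward preimage_setT probability_setT.
  exact: ltry.
Qed.

End Meas.

Local Close Scope classical_set_scope.
Local Open Scope classical_set_scope.
Lemma E_transfer {R : realType} {d d'} {T : measurableType d} {S : measurableType d'}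
  (P : probability T R) (G : S -> R) (h1 h2 : T -> S) :
  measurable_fun setT G -> measurable_fun setT h1 -> measurable_fun setT h2 ->
  (forall B, measurable B -> P (h1 @^-1` B) = P (h2 @^-1` B)) ->
  ('E_P[fun t => G (h1 t)] = 'E_P[fun t => G (h2 t)])%E.
Proof.
move=> mG m1 m2 hlaw; rewrite unlock.
have key : forall (F : S -> \bar R), measurable_fun setT F -> (forall y, (0 <= F y)%E) ->
    (\int[P]_x F (h1 x) = \int[P]_x F (h2 x))%E.
  move=> F mF F0.
  have := ge0_integral_pushforward m1 P (D:=setT) measurableT mF (fun y _ => F0 y).
  rewrite preimage_setT => /= <-.
  have := ge0_integral_pushforward m2 P (D:=setT) measurableT mF (fun y _ => F0 y).
  rewrite preimage_setT => /= <-.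
  apply: eq_measure_integral => A mA _ /=; rewrite /pushforward; exact: hlaw.
have mEG : measurable_fun setT (fun y => (G y)%:E).
  by apply: measurableT_comp => //; exact: EFin_measurable.
rewrite integralE [X in _ = X]integralE.
rewrite (funepos_comp (fun y => (G y)%:E) h1) (funepos_comp (fun y => (G y)%:E) h2).
rewrite (funeneg_comp (fun y => (G y)%:E) h1) (funeneg_comp (fun y => (G y)%:E) h2) /=.
congr (_ - _)%E.
  apply: (key (fun y => ((fun y => (G y)%:E)^\+ y)%E)).
    exact: measurable_realfun.measurable_funepos.
  by move=> y; exact: funepos_ge0.
apply: (key (fun y => ((fun y => (G y)%:E)^\- y)%E)).
  exact: measurable_realfun.measurable_funeneg.
by move=> y; exact: funeneg_ge0.
Qed.
Section Cj.
Local Open Scope ring_scope.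
Context {R : realType} {n : nat} (s : {perm 'I_n}).
Definition cj (M : 'M[R[i]]_n) : 'M[R[i]]_n := \matrix_(x, y) M (s x) (s y).

Lemma cjD A B : cj (A + B) = cj A + cj B.
Proof. by apply/matrixP => x y; rewrite !mxE. Qed.
Lemma cjB A B : cj (A - B) = cj A - cj B.
Proof. by apply/matrixP => x y; rewrite !mxE. Qed.
Lemma cjZ c A : cj (c *: A) = c *: cj A.
Proof. by apply/matrixP => x y; rewrite !mxE. Qed.
Lemma cj_scalar c : cj c%:M = c%:M.
Proof. by apply/matrixP => x y; rewrite !mxE (inj_eq perm_inj). Qed.
Lemma cj_adj A : cj (adj_mx A) = adj_mx (cj A).
Proof. by apply/matrixP => x y; rewrite /adj_mx !mxE. Qed.
Lemma cjM A B : cj (A *m B) = cj A *m cj B.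
Proof.
apply/matrixP => x y; rewrite !mxE (reindex_inj (@perm_inj _ s)) /=.
by apply: eq_bigr => w _; rewrite !mxE.
Qed.

Lemma cjE M : cj M = perm_mx s *m (M *m perm_mx s^-1).
Proof.
rewrite -col_permE -row_permE; apply/matrixP => x y; by rewrite !mxE.
Qed.

Lemma inv_right (A B : 'M[R[i]]_n) : A *m B = 1%:M -> invmx A = B.
Proof.
move=> h; have [uA _] := mulmx1_unit h.
by rewrite -[B](mulKmx uA) h mulmx1.
Qed.

Lemma cj_inv M : invmx (cj M) = cj (invmx M).
Proof.
have QQ : perm_mx s *m perm_mx s^-1 = 1%:M :> 'M[R[i]]_n.
  by rewrite -perm_mxM mulgV perm_mx1.
have [uM|nuM] := boolP (M \in unitmx).
  apply: inv_right; rewrite !cjE.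
  rewrite !mulmxA -[perm_mx s *m M *m perm_mx s^-1 *m perm_mx s]mulmxA.
  rewrite -perm_mxM mulVg perm_mx1 mulmx1 -[perm_mx s *m M *m invmx M]mulmxA.
  by rewrite mulmxV // mulmx1 QQ.
have nu : cj M \notin unitmx.
  by rewrite cjE !unitmx_mul (negbTE nuM) andbF.
by rewrite /invmx (negbTE nu) (negbTE nuM).
Qed.
End Cj.
Section Shift.
Context {R : realType} {d : measure_display} {T : measurableType d}.
Variables (m b : nat) (i0 : 'I_(m * b)).
Hypothesis bpos : (0 < b)%N.

Lemma mpos : (0 < m)%N.
Proof.
have : (0 < m * b)%N by apply: leq_ltn_trans (ltn_ord i0).
by rewrite muln_gt0 => /andP[].
Qed.

Let k := (i0 %/ b)%N.
Let r := (i0 %% b)%N.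
Lemma k_lt : (k < m)%N. Proof. by rewrite ltn_divLR. Qed.
Lemma r_lt : (r < b)%N. Proof. exact: ltn_pmod. Qed.

Definition pidx (x : nat) : nat := (((x %/ b + k) %% m) * b + (x %% b + r) %% b)%N.

Lemma pidx_div x : (pidx x %/ b = (x %/ b + k) %% m)%N.
Proof. by rewrite /pidx divnMDl // (divn_small (ltn_pmod _ bpos)) addn0. Qed.
Lemma pidx_mod x : (pidx x %% b = (x %% b + r) %% b)%N.
Proof. by rewrite /pidx modnMDl modn_mod. Qed.

Lemma pidx_lt x : (pidx x < m * b)%N.
Proof.
rewrite /pidx.
have h1 : ((x %/ b + k) %% m < m)%N := ltn_pmod _ mpos.
have h2 : ((x %% b + r) %% b < b)%N := ltn_pmod _ bpos.
apply: (@leq_trans (((x %/ b + k) %% m).+1 * b)).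
  by rewrite mulSnr ltn_add2l.
by rewrite leq_mul2r h1 orbT.
Qed.

Definition pfun (x : 'I_(m * b)) : 'I_(m * b) := Ordinal (pidx_lt x).

Lemma pfun_inj : injective pfun.
Proof.
move=> x y /(congr1 val) /= h.
have hd := pidx_div x; rewrite h pidx_div in hd.
have hm := pidx_mod x; rewrite h pidx_mod in hm.
have ex : (x %/ b < m)%N by rewrite ltn_divLR.
have ey : (y %/ b < m)%N by rewrite ltn_divLR.
move/eqP: hd; rewrite eq_sym addmod_eq // => /eqP hd.
move/eqP: hm; rewrite eq_sym addmod_eq ?ltn_pmod // => /eqP hm.
apply: val_inj => /=; by rewrite (divn_eq x b) (divn_eq y b) hd hm.
Qed.

Definition sp : {perm 'I_(m * b)} := perm pfun_inj.

Lemma sp0 (j : 'I_(m * b)) : nat_of_ord j = 0%N -> sp j = i0.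
Proof.
move=> hj; apply: val_inj; rewrite /sp permE /= /pidx hj div0n mod0n !add0n.
by rewrite !modn_small ?k_lt ?r_lt // -divn_eq.
Qed.

Definition pa (a : atom_idx m b) : atom_idx m b :=
  (a.1.1.1, Ordinal (ltn_pmod (a.1.1.2 + k) mpos),
   Ordinal (ltn_pmod (a.1.2 + r) bpos), Ordinal (ltn_pmod (a.2 + r) bpos)).

Lemma pa_inj : injective pa.
Proof.
move=> [[[c l] r1] s1] [[[c' l'] r1'] s1'] [] /= -> hl hr hs.
have -> : l = l' by apply: val_inj; apply/eqP; rewrite -(addmod_eq _ _ k m) ?ltn_ord //; apply/eqP; exact: hl.
have -> : r1 = r1' by apply: val_inj; apply/eqP; rewrite -(addmod_eq _ _ r b) ?ltn_ord //; apply/eqP; exact: hr.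
have -> : s1 = s1' by apply: val_inj; apply/eqP; rewrite -(addmod_eq _ _ r b) ?ltn_ord //; apply/eqP; exact: hs.
done.
Qed.

Definition spa : {perm atom_idx m b} := perm pa_inj.

Lemma getYE (Y : atom_idx m b -> T -> R[i]) c u v w (hu : (u < m)%N) (hv : (v < b)%N) (hw : (w < b)%N) t :
  getY Y c u v w t = Y (c, Ordinal hu, Ordinal hv, Ordinal hw) t.
Proof. by rewrite /getY !insubT. Qed.

Lemma shift_eq (L K p e : nat) : (L < m)%N ->
  (L == (K + e) %% m)%N = ((L + p) %% m == ((K + p) %% m + e) %% m)%N.
Proof. move=> hL; rewrite modnDml addnAC -(modnDml (K + e) p m) addmod_eq //; exact: ltn_pmod mpos. Qed.

Lemma band_shift (Y : atom_idx m b -> T -> R[i]) t :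
  band_mx (fun a t => Y (spa a) t) t = cj sp (band_mx Y t).
Proof.
apply/matrixP => x y; rewrite /cj !mxE /=.
rewrite /sp !permE /= !pidx_div !pidx_mod.
have hK : (x %/ b < m)%N by rewrite ltn_divLR.
have hL : (y %/ b < m)%N by rewrite ltn_divLR.
have hR : (x %% b < b)%N by rewrite ltn_pmod.
have hS : (y %% b < b)%N by rewrite ltn_pmod.
rewrite !(getYE _ _ _ _ _ hL hR hS).
rewrite !(getYE _ _ _ _ _ (ltn_pmod _ mpos) (ltn_pmod _ bpos) (ltn_pmod _ bpos)).
rewrite /spa !permE /pa /=.
rewrite eqn_modDr (modn_small hL) (modn_small hK).
rewrite -(shift_eq (y %/ b) (x %/ b) k m.-1 hL).
rewrite -[((x %/ b + k) %% m).+1]addn1 -(shift_eq (y %/ b) (x %/ b) k 1 hL) addn1.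
done.
Qed.

Lemma Pmat_shift (Y : atom_idx m b -> T -> R[i]) z zeta t :
  Pmat (fun a t => Y (spa a) t) z zeta t = cj sp (Pmat Y z zeta t).
Proof.
by rewrite /Pmat /= band_shift !cjB cjM cj_adj !cjB cjZ !cj_scalar.
Qed.

Lemma resolvent_shift (Y : atom_idx m b -> T -> R[i]) z zeta t (j : 'I_(m * b)) :
  nat_of_ord j = 0%N ->
  invmx (Pmat Y z zeta t) i0 i0 = invmx (Pmat (fun a t => Y (spa a) t) z zeta t) j j.
Proof. by move=> hj; rewrite Pmat_shift cj_inv /cj mxE sp0. Qed.

End Shift.


Lemma band_eval {R : realType} {d : measure_display} {T : measurableType d} {m b : nat}
  (Y : atom_idx m b -> T -> R[i]) (t : T) :
  band_mx Y t = band_mx (T:=Sv R (atom_idx m b)) (fun a w => w a) (fun a => Y a t).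
Proof. apply/matrixP => x y; rewrite !mxE; rewrite /getY; done. Qed.

Lemma Pmat_eval {R : realType} {d : measure_display} {T : measurableType d} {m b : nat}
  (Y : atom_idx m b -> T -> R[i]) z zeta (t : T) :
  Pmat Y z zeta t = Pmat (T:=Sv R (atom_idx m b)) (fun a w => w a) z zeta (fun a => Y a t).
Proof. by rewrite /Pmat band_eval. Qed.

Theorem lemmaA8 (R : realType) (d : measure_display) (T : measurableType d)
    (P : probability T R) (xi : T -> R[i]) (eps : R) (m b : nat)
    (Y : atom_idx m b -> T -> R[i]) (z zeta : R[i]) :
  crv xi ->
  cexpect P xi = 0 ->
  ('E_P[fun t => (cmod (xi t) ^+ 2)%R] = 1)%E ->
  0 < eps ->
  ('E_P[fun t => (cmod (xi t) `^ (4 + eps))%R] < +oo)%E ->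
  (0 < b)%N ->
  (forall a, crv (Y a)) ->
  cindep P Y ->
  (forall a, same_law P (Y a) xi) ->
  0 < complex.Im zeta ->
  forall i j : 'I_(m * b), nat_of_ord j = 0%N ->
    cexpect P (fun t => (invmx (Pmat Y z zeta t)) i i) =
    cexpect P (fun t => (invmx (Pmat Y z zeta t)) j j).
Proof.
move=> _ _ _ _ _ hb hY hind hlaw _ i j hj.
pose S := Sv R (atom_idx m b).
pose G0 := fun v : S => invmx (Pmat (T:=S) (fun a w => w a) z zeta v) j j.
pose s := spa m b i hb.
have hi : forall t, invmx (Pmat Y z zeta t) i i = G0 (fun a => Y (s a) t).
  by move=> t; rewrite (resolvent_shift m b i hb Y z zeta t j hj) Pmat_eval.
have hj' : forall t, invmx (Pmat Y z zeta t) j j = G0 (fun a => Y a t).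
  by move=> t; rewrite Pmat_eval.
have hcm : cm G0.
  apply: (cm_resolvent (fun a (w : S) => w a)) => a.
  by split; [exact: proj_Re | exact: proj_Im].
have m1 := vec_meas R (atom_idx m b) (fun a => Y (s a)) (fun a => hY (s a)).
have m2 := vec_meas R (atom_idx m b) Y hY.
have law : forall B : set S, measurable B ->
    P ((fun t a => Y (s a) t) @^-1` B) = P ((fun t a => Y a t) @^-1` B).
  by move=> B mB; rewrite (law_perm R (atom_idx m b) P Y xi s hY hind hlaw B mB).
have E : forall (g : R[i] -> R), measurable_fun setT (fun v => g (G0 v)) ->
    ('E_P[fun t => g (invmx (Pmat Y z zeta t) i i)] =
     'E_P[fun t => g (invmx (Pmat Y z zeta t) j j)])%E.
  move=> g mg.
  have -> : (fun t => g (invmx (Pmat Y z zeta t) i i)) = (fun t => g (G0 (fun a => Y (s a) t))).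
    by apply: funext => t; rewrite hi.
  have -> : (fun t => g (invmx (Pmat Y z zeta t) j j)) = (fun t => g (G0 (fun a => Y a t))).
    by apply: funext => t; rewrite hj'.
  exact: (E_transfer P (fun v => g (G0 v)) _ _ mg m1 m2 law).
rewrite /cexpect; congr Complex; congr fine.
  exact: (E _ (proj1 hcm)).
exact: (E _ (proj2 hcm)).
Qed.
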